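(* Consider the block hyper-$g$ regression model with blocks $X_1,\dots,X_k$ ($X_i$ of size $n\times p_i$) satisfying the block orthogonality condition below, and the sequence of problems $\Psi_N$ with data $y_N=\alpha\mathbf 1+X_1\beta_{1(N)}+X_2\beta_2+\dots+X_k\beta_k+\epsilon$, where $X_1,\dots,X_k,\alpha,\beta_2,\dots,\beta_k,\epsilon$ are held fixed and $\|\beta_{1(N)}\|\to\infty$ as $N\to\infty$. Then, as $N\to\infty$, $R_1^2\to1$ and $R_i^2\to0$ for all $i\neq1$.
   Context: Block hyper-$g$ prior with hyperparameter $2<a\le4$: $y\mid\alpha,\beta,\sigma^2\sim N(\alpha\mathbf 1+X\beta,\sigma^2I)$ with $X=(X_1,\dots,X_k)$ of full column rank, $\beta=(\beta_1^T,\dots,\beta_k^T)^T$; $\beta\mid g,\sigma^2\sim N(0,A\sigma^2)$ with $A$ block diagonal with blocks $g_i(X_i^TX_i)^{-1}$; $\pi(\alpha,\sigma^2)\propto1/\sigma^2$; $g_1,\dots,g_k$ independent with densities $\frac{a-2}{2}(1+g_i)^{-a/2}$, $g_i>0$. Block orthogonality condition: the predictors and the response are centered ($\mathbf 1^TX_i=0$, $\mathbf 1^Ty=0$) and $X_i^TX_j=0$ for $i\ne j$. $R_i^2=y^TP_{X_i}y/y^Ty$, where $P_{X_i}$ is the orthogonal projection onto the column space of $X_i$; $n>p+1$ with $p=\sum_ip_i$. *)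

(* Defs.v *)
From HB Require Import structures.
From mathcomp Require Import all_boot all_order all_algebra.
From mathcomp Require Import all_classical all_reals all_analysis.
Set Implicit Arguments. Unset Strict Implicit. Unset Printing Implicit Defensive.
Import Order.TTheory GRing.Theory Num.Theory.
Local Open Scope ring_scope.

Definition projmx (R : realType) (n q : nat) (X : 'M[R]_(n, q)) : 'M[R]_n :=
  X *m invmx (X^T *m X) *m X^T.

Definition Rsq (R : realType) (n q : nat) (y : 'cV[R]_n) (X : 'M[R]_(n, q)) : R :=
  (y^T *m projmx X *m y) 0 0 / (y^T *m y) 0 0.

Definition enorm (R : realType) (m : nat) (v : 'cV[R]_m) : R :=
  Num.sqrt ((v^T *m v) 0 0).

Definition ones (R : realType) (n : nat) : 'cV[R]_n := const_mx 1.

(* Main.v *)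
Require Import Defs.
From HB Require Import structures.
From mathcomp Require Import all_boot all_order all_algebra.
From mathcomp Require Import all_classical all_reals all_analysis.
Import Order.TTheory GRing.Theory Num.Theory.
Import numFieldNormedType.Exports.
Local Open Scope classical_set_scope.
Local Open Scope ring_scope.

From mathcomp Require Import ring lra.
Section Aux.
Variable R : realType.
Definition sq {m} (v : 'cV[R]_m) : R := (v^T *m v) 0 0.

Lemma sq_sum m (v : 'cV[R]_m) : sq v = \sum_i v i 0 ^+ 2.
Proof. by rewrite /sq mxE; apply: eq_bigr => i _; rewrite mxE expr2. Qed.

Lemma sq_ge0 m (v : 'cV[R]_m) : 0 <= sq v.
Proof. by rewrite sq_sum; apply: sumr_ge0 => i _; exact: sqr_ge0. Qed.

Lemma sq_eq0 m (v : 'cV[R]_m) : sq v = 0 -> v = 0.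
Proof.
rewrite sq_sum => h; apply/matrixP => i j; rewrite (ord1 j) mxE.
apply/eqP; rewrite -sqrf_eq0; apply/eqP.
exact: (psumr_eq0P (fun i _ => sqr_ge0 (v i 0)) h).
Qed.

Lemma sq_entry m (v : 'cV[R]_m) j : `|v j 0| <= Num.sqrt (sq v).
Proof.
rewrite -sqrtr_sqr; apply: ler_wsqrtr; rewrite sq_sum (bigD1 j) //=.
by rewrite lerDl; apply: sumr_ge0 => i _; exact: sqr_ge0.
Qed.

Lemma sq_bound m n (M : 'M[R]_(m, n)) (v : 'cV[R]_n) :
  sq (M *m v) <= (\sum_i (\sum_j `|M i j|) ^+ 2) * sq v.
Proof.
rewrite [sq (M *m v)]sq_sum mulr_suml; apply: ler_sum => i _.
rewrite -[sq v]sqr_sqrtr ?sq_ge0 // -exprMn mxE -real_normK ?num_real //.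
apply: lerXn2r; rewrite ?nnegrE ?normr_ge0 ?mulr_ge0 ?sqrtr_ge0 ?sumr_ge0 //.
  apply: le_trans (ler_norm_sum _ _ _) _; rewrite mulr_suml.
  apply: ler_sum => j _; rewrite normrM; apply: ler_wpM2l => //.
  exact: sq_entry.
Qed.

Lemma sq_add m (a b : 'cV[R]_m) : sq (a + b) <= 2 * sq a + 2 * sq b.
Proof.
rewrite !sq_sum !mulr_sumr -big_split /=; apply: ler_sum => i _.
rewrite mxE; have := sqr_ge0 (a i 0 - b i 0); rewrite !expr2 => h; nra.
Qed.

Lemma sq_opp m (a : 'cV[R]_m) : sq (- a) = sq a.
Proof. by rewrite !sq_sum; apply: eq_bigr => i _; rewrite mxE sqrrN. Qed.
End Aux.
Arguments sq {R m}. Arguments sq_add {R m}. Arguments sq_opp {R m}. Arguments sq_ge0 {R m}. Arguments sq_bound {R m n}. Arguments sq_eq0 {R m}. Arguments sq_entry {R m}. Arguments sq_sum {R m}.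
Lemma rank_castc (F : fieldType) m n n' (e : n = n') (A : 'M[F]_(m, n)) :
  \rank (castmx (erefl m, e) A) = \rank A.
Proof. by case: n' / e; rewrite castmx_id. Qed.

Lemma rank_row_mx_le (F : fieldType) m n1 n2 (A : 'M[F]_(m, n1)) (B : 'M[F]_(m, n2)) :
  (\rank (row_mx A B) <= \rank A + \rank B)%N.
Proof.
rewrite -mxrank_tr tr_row_mx -(mxrank_tr A) -(mxrank_tr B).
rewrite -addsmxE.
exact: (mxrank_adds_leqif _ _).
Qed.

Arguments rank_row_mx_le {F m n1 n2}.
Lemma gram_unit (R : realType) n q (X : 'M[R]_(n, q)) :
  \rank X = q -> (X^T *m X) \in unitmx.
Proof.
move=> rk; rewrite -row_free_unit; apply: inj_row_free => w hw.
have h0 : X *m w^T = 0.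
  apply: sq_eq0; rewrite /sq trmx_mul trmxK.
  by rewrite mulmxA -(mulmxA w) hw mul0mx mxE.
have h1 : w *m X^T = 0 by rewrite -[w]trmxK -trmx_mul h0 trmx0.
have fr : row_free X^T by rewrite /row_free mxrank_tr rk.
by apply/eqP; rewrite -(mulmx_free_eq0 _ fr) h1.
Qed.

Lemma rank_first (R : realType) n k (p : 'I_k.+1 -> nat)
  (X : forall i : 'I_k.+1, 'M[R]_(n, p i)) :
  \rank (mxrow (fun i => X i)) = (\sum_i p i)%N -> \rank (X ord0) = p ord0.
Proof.
move=> rk; apply/eqP; rewrite eqn_leq rank_leq_col /=.
move: rk; rewrite mxrow_recl rank_castc => rk.
have h1 := rank_row_mx_le (X ord0) (\mxrow_j X (lift ord0 j)).
have h2 := rank_leq_col (\mxrow_j X (lift ord0 j)).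
rewrite rk big_ord_recl in h1.
rewrite -(leq_add2r (\sum_(i < k) p (lift ord0 i))).
by apply: leq_trans h1 _; rewrite leq_add2l.
Qed.

Lemma small_near (R : realType) (D : nat -> R) (K e : R) :
  D @ \oo --> +oo -> 0 < e ->
  \forall N \near \oo, 0 < D N /\ `|K / D N| < e.
Proof.
move=> /cvgryPgt hD e0.
apply: filterS (hD (`|K| / e)) => N hN.
have Dp : 0 < D N by apply: le_lt_trans hN; rewrite divr_ge0 ?normr_ge0 ?ltW.
split => //; rewrite normrM normfV (gtr0_norm Dp) ltr_pdivrMr // mulrC.
by rewrite -ltr_pdivrMr.
Qed.

Lemma cvg_div0 (R : realType) (D : nat -> R) K :
  D @ \oo --> +oo -> (fun N => K / D N) @ \oo --> (0 : R).
Proof.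
move=> hD; apply/cvgr0Pnorm_lt => e e0.
by apply: filterS (@small_near _ _ K _ hD e0) => N [].
Qed.

Lemma cvg_div1 (R : realType) (D : nat -> R) K :
  D @ \oo --> +oo -> (fun N => (D N + K) / D N) @ \oo --> (1 : R).
Proof.
move=> hD; apply: cvg_zero; apply/cvgr0Pnorm_lt => e e0.
apply: filterS (@small_near _ _ K _ hD e0) => N [Dp h].
rewrite !fctE mulrDl divff ?gt_eqF // addrC addKr.
exact h.
Qed.

Lemma entryD (R : realType) m n (A B : 'M[R]_(m, n)) i j : (A + B) i j = A i j + B i j.
Proof. by rewrite mxE. Qed.
Lemma entryB (R : realType) m n (A B : 'M[R]_(m, n)) i j : (A - B) i j = A i j - B i j.
Proof. by rewrite !mxE. Qed.

(* Blocks are indexed by 'I_k.+1; block "1" of the paper is ord0. *)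
Theorem lemma4p1 (R : realType) (n k : nat) (p : 'I_k.+1 -> nat)
  (X : forall i : 'I_k.+1, 'M[R]_(n, p i))
  (alpha : R) (beta1 : nat -> 'cV[R]_(p ord0))
  (beta : forall i : 'I_k.+1, 'cV[R]_(p i)) (eps : 'cV[R]_n)
  (y : nat -> 'cV[R]_n) :
  (* full column rank of X = (X_1, ..., X_k) *)
  \rank (mxrow (fun i => X i)) = (\sum_i p i)%N ->
  (* n > p + 1 *)
  ((\sum_i p i).+1 < n)%N ->
  (* block orthogonality: centered predictors, orthogonal blocks *)
  (forall i, (ones R n)^T *m X i = 0) ->
  (forall i j, i != j -> (X i)^T *m X j = 0) ->
  (* the data of problem Psi_N *)
  (forall N, y N = alpha *: ones R n + X ord0 *m beta1 N
                   + \sum_(i | i != ord0) X i *m beta i + eps) ->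
  (* centered response *)
  (forall N, (ones R n)^T *m y N = 0) ->
  (* ||beta_1(N)|| -> infinity *)
  (fun N => enorm (beta1 N)) @ \oo --> +oo ->
  (fun N => Rsq (y N) (X ord0)) @ \oo --> (1 : R) /\
  (forall i, i != ord0 -> (fun N => Rsq (y N) (X i)) @ \oo --> (0 : R)).
Proof.
move=> rk _ _ hort hy _ hb.
set X0 := X ord0.
set c := alpha *: ones R n + \sum_(i | i != ord0) X i *m beta i + eps.
have hy' : forall N, y N = X0 *m beta1 N + c.
  by move=> N; rewrite hy /c [alpha *: _ + _]addrC -!addrA.
clearbody c.
have hG : (X0^T *m X0) \in unitmx by apply: gram_unit; exact: rank_first rk.
set M := invmx (X0^T *m X0) *m X0^T.
set C := \sum_i (\sum_j `|M i j|) ^+ 2.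
have C0 : 0 <= C by apply: sumr_ge0 => i _; exact: sqr_ge0.
have hD : (fun N => sq (y N)) @ \oo --> +oo.
  apply/cvgryPge => A.
  move/cvgryPge: hb => /(_ (Num.sqrt (2 * (C + 1) * (A + sq c)))).
  apply: filterS => N hN.
  have h1 : 2 * (C + 1) * (A + sq c) <= sq (beta1 N).
    by rewrite -ler_sqrt ?sq_ge0.
  have h2 : sq (beta1 N) <= C * sq (X0 *m beta1 N).
    have e : beta1 N = M *m (X0 *m beta1 N).
      by rewrite /M mulmxA -(mulmxA _ X0^T) mulVmx // mul1mx.
    rewrite {1}e; exact: sq_bound.
  have h3 : sq (X0 *m beta1 N) <= 2 * sq (y N) + 2 * sq c.
    have -> : X0 *m beta1 N = y N + - c by rewrite hy' addrK.
    by have := sq_add (y N) (- c); rewrite sq_opp.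
  have := sq_ge0 (y N); have := sq_ge0 c; have := sq_ge0 (X0 *m beta1 N).
  nra.
split.
  set P := projmx X0.
  have PX : P *m X0 = X0 by rewrite /P /projmx -!mulmxA mulVmx // mulmx1.
  have XP : X0^T *m P = X0^T by rewrite /P /projmx !mulmxA mulmxV // mul1mx.
  set K := (c^T *m P *m c) 0 0 - sq c.
  have E : forall N, Rsq (y N) X0 = (sq (y N) + K) / sq (y N).
    move=> N; rewrite /Rsq -/P hy'; set u := X0 *m beta1 N.
    have Pu : P *m u = u by rewrite /u mulmxA PX.
    have uP : u^T *m P = u^T by rewrite /u trmx_mul -mulmxA XP.
    congr (_ / _); have trD : (u + c)^T = u^T + c^T by rewrite linearD.
    have Em : (u + c)^T *m P *m (u + c) =
        (u + c)^T *m (u + c) + (c^T *m P *m c - c^T *m c).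
      rewrite trD !mulmxDl uP !mulmxDr -(mulmxA c^T P u) Pu.
      by rewrite -!addrA [c^T *m c + _]addrC subrK.
    by rewrite /K /sq Em entryD entryB.
  rewrite (funext E); exact: cvg_div1.
move=> i hi.
set P := projmx (X i).
have E : forall N, Rsq (y N) (X i) = (c^T *m P *m c) 0 0 / sq (y N).
  move=> N; rewrite /Rsq /P /projmx.
  have h1 : (X i)^T *m y N = (X i)^T *m c.
    by rewrite hy' mulmxDr mulmxA hort ?mul0mx ?add0r // eq_sym.
  have h2 : (y N)^T *m X i = c^T *m X i.
    by rewrite -[X i]trmxK -!trmx_mul h1.
  by rewrite !mulmxA h2 -!(mulmxA _ _ (y N)) h1 !mulmxA.
rewrite (funext E); exact: cvg_div0.
Qed.
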